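(* Let $M,K$ be real anti-symmetric $m\times m$ matrices, $S:\mathbb R^m\to\mathbb R$ smooth, $A$ real symmetric, and let $Q$ be an orthogonal matrix and $\Lambda$ a real $\lfloor m/2\rfloor\times\lfloor m/2\rfloor$ matrix with $$K=Q^T\begin{pmatrix}0&0&-\Lambda^T\\0&0&0\\\Lambda&0&0\end{pmatrix}Q\ (m\text{ odd}),\qquad K=Q^T\begin{pmatrix}0&-\Lambda^T\\\Lambda&0\end{pmatrix}Q\ (m\text{ even}).$$ Suppose $B=\beta M$ for some real $\beta$ and that the last $\lfloor m/2\rfloor$ columns of $MQ^T$ are zero. Let $\mathbf z_h$ be a solution of the semi-discrete DG scheme described in the context, and write $Q\mathbf z_h=(\mathbf u_h,w_h,\mathbf v_h)^T$ ($m$ odd) or $Q\mathbf z_h=(\mathbf u_h,\mathbf v_h)^T$ ($m$ even) with $\mathbf u_h,\mathbf v_h\in(V_h)^{\lfloor m/2\rfloor}$, $w_h\in V_h$. Let $\nabla_{\mathbf v}S(\mathbf z_h)$ denote the vector of the last $\lfloor m/2\rfloor$ components of $Q\nabla_{\mathbf z}S(\mathbf z_h)$, and let $$\widetilde A=Q^T\begin{pmatrix}I&0&0\\0&1&0\\0&0&-I\end{pmatrix}QA\ (m\text{ odd}),\qquad \widetilde A=Q^T\begin{pmatrix}I&0\\0&-I\end{pmatrix}QA\ (m\text{ even}).$$ Then the total energy $\mathcal E_h=\int_\Omega\big(S(\mathbf z_h)-\tfrac12K\partial_x\mathbf z_h\cdot\mathbf z_h\big)dx+\tfrac12\sum_j\big((K\{\mathbf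 z_h\}+A[\mathbf z_h])\cdot[\mathbf z_h]\big)_{j+\frac12}$ satisfies $$\mathcal E_h=\int_\Omega\big(S(\mathbf z_h)-\nabla_{\mathbf v}S(\mathbf z_h)\cdot\mathbf v_h\big)dx+\tfrac12\sum_j\big(\widetilde A[\mathbf z_h]\cdot[\mathbf z_h]\big)_{j+\frac12}.$$ In particular, if $A=\alpha Q^T\begin{pmatrix}0&0&\Lambda^T\\0&0&0\\\Lambda&0&0\end{pmatrix}Q$ ($m$ odd) or $A=\alpha Q^T\begin{pmatrix}0&\Lambda^T\\\Lambda&0\end{pmatrix}Q$ ($m$ even) with $\alpha\in[-\frac12,\frac12]$, then $\widetilde A$ is anti-symmetric and $\mathcal E_h=\int_\Omega\big(S(\mathbf z_h)-\nabla_{\mathbf v}S(\mathbf z_h)\cdot\mathbf v_h\big)dx$.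
   Context: Mesh and spaces: a one-dimensional domain $\Omega$ is partitioned into cells $I_j=[x_{j-1/2},x_{j+1/2}]$, $j=1,\dots,N$, with periodic boundary conditions (interface indices modulo $N$). For fixed $k\ge0$, $V_h=\{v\in L^2(\Omega): v|_{I_j}\text{ is a polynomial of degree}\le k\ \forall j\}$, $\mathbf V_h=(V_h)^m$. For $\mathbf v\in\mathbf V_h$, $\mathbf v^\pm_{j+1/2}$ are right/left limits at $x_{j+1/2}$, $\{\mathbf v\}=\frac12(\mathbf v^++\mathbf v^-)$, $[\mathbf v]=\mathbf v^+-\mathbf v^-$; subscript $j+\frac12$ means evaluation at $x_{j+1/2}$; $\partial_x$ is taken cellwise. The semi-discrete DG scheme: find $\mathbf z_h(t)\in\mathbf V_h$, continuously differentiable in $t$, such that for all $j$ and all $\boldsymbol\varphi\in\mathbf V_h$, $$\int_{I_j}M\partial_t\mathbf z_h\cdot\boldsymbol\varphi\,dx-\int_{I_j}K\mathbf z_h\cdot\partial_x\boldsymbol\varphi\,dx+\big(\widehat{K\mathbf z_h}\cdot\boldsymbol\varphi^-\big)_{j+\frac12}-\big(\widehat{K\mathbf z_h}\cdot\boldsymbol\varphi^+\big)_{j-\frac12}=\int_{I_j}\nabla_{\mathbf z}S(\mathbf z_h)\cdot\boldsymbol\varphi\,dx,$$ with $\widehat{K\mathbf z_h}=K\{\mathbf z_h\}+A[\mathbf z_h]+B\,\partial_t[\mathbf z_h]$ at each interface. *)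

(* Defs.v *)
From Stdlib Require Import Reals.
From Coquelicot Require Import Coquelicot.
From HB Require Import structures.
From mathcomp Require Import all_boot all_order all_algebra.
From mathcomp Require Import Rstruct.
Set Implicit Arguments. Unset Strict Implicit. Unset Printing Implicit Defensive.
Import GRing.Theory Num.Theory.
Local Open Scope ring_scope.

Definition dotv (m : nat) (a b : 'cV[R]_m) : R := \sum_(i < m) a i 0 * b i 0.

(* dot product of the last floor(m/2) components (the "v"-block) *)
Definition vdot (m : nat) (a b : 'cV[R]_m) : R :=
  \sum_(i < m | (m - m./2 <= i)%N) a i 0 * b i 0.

(* m = floor(m/2) + (r + floor(m/2)) with r = 1 (m odd) or 0 (m even) *)
Lemma blk_eq (m : nat) : m = (m./2 + (odd m + m./2))%N.
Proof. by rewrite addnCA addnn odd_double_half. Qed.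

Definition castm (m : nat) (X : 'M[R]_(m./2 + (odd m + m./2))) : 'M[R]_m :=
  castmx (esym (blk_eq m), esym (blk_eq m)) X.

(* [[0,0,-L^T],[0,0,0],[L,0,0]]  (middle block absent if m even) *)
Definition Kblk (m : nat) (L : 'M[R]_(m./2)) : 'M[R]_m :=
  castm (block_mx (0 : 'M[R]_(m./2, m./2))
                  (row_mx (0 : 'M[R]_(m./2, odd m)) (- L^T))
                  (col_mx (0 : 'M[R]_(odd m, m./2)) L)
                  (0 : 'M[R]_(odd m + m./2, odd m + m./2))).

(* [[0,0,L^T],[0,0,0],[L,0,0]] *)
Definition Ablk (m : nat) (L : 'M[R]_(m./2)) : 'M[R]_m :=
  castm (block_mx (0 : 'M[R]_(m./2, m./2))
                  (row_mx (0 : 'M[R]_(m./2, odd m)) L^T)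
                  (col_mx (0 : 'M[R]_(odd m, m./2)) L)
                  (0 : 'M[R]_(odd m + m./2, odd m + m./2))).

(* diag(I, 1, -I) *)
Definition Dblk (m : nat) : 'M[R]_m :=
  castm (block_mx (1%:M : 'M[R]_(m./2)) 0 0
                  (block_mx (1%:M : 'M[R]_(odd m)) 0 0 (- (1%:M : 'M[R]_(m./2))))).

Definition pdir (m : nat) (i : 'I_m) (f : 'cV[R]_m -> R) : 'cV[R]_m -> R :=
  fun y => Derive (fun s : R => f (y + s *: delta_mx i 0)) 0.

Fixpoint itpd (m : nat) (l : seq 'I_m) (f : 'cV[R]_m -> R) : 'cV[R]_m -> R :=
  match l with [::] => f | i :: l' => pdir i (itpd l' f) end.

Definition contv (m : nat) (f : 'cV[R]_m -> R) (y : 'cV[R]_m) : Prop :=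
  forall eps : R, 0 < eps -> exists2 d : R, 0 < d &
    forall y' : 'cV[R]_m, (forall i, `|y' i 0 - y i 0| < d) -> `|f y' - f y| < eps.

Definition smooth (m : nat) (f : 'cV[R]_m -> R) : Prop :=
  forall (l : seq 'I_m) (y : 'cV[R]_m), contv (itpd l f) y /\
    forall i, ex_derive (fun s : R => itpd l f (y + s *: delta_mx i 0)) 0.

Definition gradS (m : nat) (f : 'cV[R]_m -> R) (y : 'cV[R]_m) : 'cV[R]_m :=
  \col_i pdir i f y.

(* ---------- DG spaces on a periodic mesh ----------
   Cells I_j = [xs j, xs (j+1)], j = 0..N-1 (0-based); the interface
   after cell j is x = xs (j+1), identified periodically with xs 0 for j = N-1.
   An element of V_h^m is given by its monomial coefficients:
   on cell j, component i is  sum_{l<=k} c j i l * x^l. *)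
Definition field (N m k : nat) := 'I_N -> 'I_m -> 'I_k.+1 -> R.

Definition ev N m k (c : field N m k) (j : 'I_N) (x : R) : 'cV[R]_m :=
  \col_i \sum_(l < k.+1) c j i l * x ^+ l.

Definition evx N m k (c : field N m k) (j : 'I_N) (x : R) : 'cV[R]_m :=
  \col_i \sum_(l < k.+1) c j i l * ((l : nat)%:R * x ^+ (l.-1)).

(* left (v^-) and right (v^+) limits at the interface after cell j *)
Definition trm N m k (xs : nat -> R) (c : field N m k) (j : 'I_N) : 'cV[R]_m :=
  ev c j (xs j.+1).
Definition trp N m k (xs : nat -> R) (c : field N m k) (j : 'I_N) : 'cV[R]_m :=
  ev c (ordS j) (xs (ordS j)).

Definition jump N m k xs (c : field N m k) j : 'cV[R]_m := trp xs c j - trm xs c j.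
Definition avg N m k xs (c : field N m k) j : 'cV[R]_m :=
  2^-1 *: (trp xs c j + trm xs c j).

Definition dtf N m k (z : R -> field N m k) (t : R) : field N m k :=
  fun j i l => Derive (fun s : R => z s j i l) t.

Definition C1_at N m k (z : R -> field N m k) (t : R) : Prop :=
  forall j i l, ex_derive (fun s : R => z s j i l) t /\
    continuous (fun s : R => Derive (fun s' : R => z s' j i l) s) t.

Definition flux N m k xs (K A B : 'M[R]_m) (z : R -> field N m k) t j : 'cV[R]_m :=
  K *m avg xs (z t) j + A *m jump xs (z t) j + B *m jump xs (dtf z t) j.

Definition dg_scheme N m k (xs : nat -> R) (M K A B : 'M[R]_m)
    (S : 'cV[R]_m -> R) (z : R -> field N m k) (t : R) : Prop :=
  forall (j : 'I_N) (phi : field N m k),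
    RInt (fun x : R => dotv (M *m ev (dtf z t) j x) (ev phi j x)) (xs j) (xs j.+1)
    - RInt (fun x : R => dotv (K *m ev (z t) j x) (evx phi j x)) (xs j) (xs j.+1)
    + dotv (flux xs K A B z t j) (ev phi j (xs j.+1))
    - dotv (flux xs K A B z t (ord_pred j)) (ev phi j (xs j))
    = RInt (fun x : R => dotv (gradS S (ev (z t) j x)) (ev phi j x)) (xs j) (xs j.+1).

Definition energy N m k (xs : nat -> R) (K A : 'M[R]_m) (S : 'cV[R]_m -> R)
    (c : field N m k) : R :=
  \sum_(j < N) RInt (fun x : R => S (ev c j x) - 2^-1 * dotv (K *m evx c j x) (ev c j x))
                    (xs j) (xs j.+1)
  + 2^-1 * \sum_(j < N) dotv (K *m avg xs c j + A *m jump xs c j) (jump xs c j).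

Definition vintegral N m k (xs : nat -> R) (Q : 'M[R]_m) (S : 'cV[R]_m -> R)
    (c : field N m k) : R :=
  \sum_(j < N) RInt (fun x : R => S (ev c j x)
                    - vdot (Q *m gradS S (ev c j x)) (Q *m ev c j x)) (xs j) (xs j.+1).

Definition jumpterm N m k (xs : nat -> R) (At : 'M[R]_m) (c : field N m k) : R :=
  2^-1 * \sum_(j < N) dotv (At *m jump xs c j) (jump xs c j).

(* Main.v *)
Set Warnings "-all".
Require Import Defs.
From Stdlib Require Import Reals.
From Coquelicot Require Import Coquelicot.
From HB Require Import structures.
From mathcomp Require Import all_boot all_order all_algebra.
From mathcomp Require Import Rstruct.
From mathcomp Require Import ring lra zify.
From Stdlib Require Import FunctionalExtensionality.
Import Order.TTheory GRing.Theory Num.Theory.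
Local Open Scope ring_scope.


Section Dot.
Variable m : nat.
Implicit Types a b c : 'cV[R]_m.

Lemma dotvE a b : dotv a b = (a^T *m b) 0 0.
Proof. by rewrite /dotv mxE; apply: eq_bigr => i _; rewrite mxE. Qed.

Lemma dotvC a b : dotv a b = dotv b a.
Proof. by rewrite /dotv; apply: eq_bigr => i _; rewrite mulrC. Qed.

Lemma dotvDl a b c : dotv (a + b) c = dotv a c + dotv b c.
Proof. by rewrite /dotv -big_split; apply: eq_bigr => i _; rewrite mxE mulrDl. Qed.

Lemma dotvDr a b c : dotv c (a + b) = dotv c a + dotv c b.
Proof. by rewrite dotvC dotvDl !(dotvC c). Qed.

Lemma dotvZl r a b : dotv (r *: a) b = r * dotv a b.
Proof. by rewrite /dotv mulr_sumr; apply: eq_bigr => i _; rewrite mxE mulrA. Qed.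

Lemma dotvZr r a b : dotv b (r *: a) = r * dotv b a.
Proof. by rewrite dotvC dotvZl dotvC. Qed.

Lemma dotvNl a b : dotv (- a) b = - dotv a b.
Proof. by rewrite -scaleN1r dotvZl mulN1r. Qed.

Lemma dotvNr a b : dotv b (- a) = - dotv b a.
Proof. by rewrite dotvC dotvNl dotvC. Qed.

Lemma dotvBl a b c : dotv (a - b) c = dotv a c - dotv b c.
Proof. by rewrite dotvDl dotvNl. Qed.

Lemma dotvBr a b c : dotv c (a - b) = dotv c a - dotv c b.
Proof. by rewrite dotvDr dotvNr. Qed.

Lemma dotv_mull (X : 'M[R]_m) a b : dotv (X *m a) b = dotv a (X^T *m b).
Proof. by rewrite !dotvE trmx_mul mulmxA. Qed.

Lemma dotv_skew (X : 'M[R]_m) a : X^T = - X -> dotv (X *m a) a = 0.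
Proof.
move=> hX; have : dotv (X *m a) a = - dotv (X *m a) a.
  by rewrite {1}dotv_mull hX mulNmx dotvNr dotvC.
move=> h; lra.
Qed.
End Dot.
Lemma castmxM' n n' (e : n = n') (X Y : 'M[R]_n) :
  castmx (e, e) (X *m Y) = castmx (e, e) X *m castmx (e, e) Y.
Proof. by subst n'; rewrite !castmx_id. Qed.
Lemma castmxN' n n' (e : n = n') (X : 'M[R]_n) :
  castmx (e, e) (- X) = - castmx (e, e) X.
Proof. by subst n'; rewrite !castmx_id. Qed.
Lemma castmxT' n n' (e : n = n') (X : 'M[R]_n) :
  castmx (e, e) (X^T) = (castmx (e, e) X)^T.
Proof. by subst n'; rewrite !castmx_id. Qed.

Lemma castmM m X Y : castm (X *m Y) = castm X *m castm Y :> 'M[R]_m.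
Proof. exact: castmxM'. Qed.
Lemma castmN m X : castm (- X) = - castm X :> 'M[R]_m.
Proof. exact: castmxN'. Qed.
Lemma castmT m X : castm (X^T) = (castm X)^T :> 'M[R]_m.
Proof. exact: castmxT'. Qed.

Section Blk.
Variable m : nat.
Variable L : 'M[R]_(m./2).
Local Notation p := (m./2).
Local Notation o := (odd m).

Definition Dinner : 'M[R]_(p + (o + p)) :=
  block_mx (1%:M : 'M[R]_(p)) 0 0
                  (block_mx (1%:M : 'M[R]_(o)) 0 0 (- (1%:M : 'M[R]_(p)))).
Definition Kinner (L : 'M[R]_p) : 'M[R]_(p + (o + p)) :=
 block_mx (0 : 'M[R]_(p, p))
                  (row_mx (0 : 'M[R]_(p, o)) (- L^T))
                  (col_mx (0 : 'M[R]_(o, p)) L)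
                  (0 : 'M[R]_(o + p, o + p)).
Definition Ainner (L : 'M[R]_p) : 'M[R]_(p + (o + p)) :=
 block_mx (0 : 'M[R]_(p, p))
                  (row_mx (0 : 'M[R]_(p, o)) L^T)
                  (col_mx (0 : 'M[R]_(o, p)) L)
                  (0 : 'M[R]_(o + p, o + p)).

Lemma KD : Kinner L *m Dinner = Ainner L.
Proof.
rewrite /Kinner /Dinner /Ainner mulmx_block.
rewrite !mul0mx !mulmx0 !addr0 !add0r mulmx1 mul_row_block.
by rewrite !mul0mx !mulmx0 !addr0 !add0r mulmxN mulNmx mulmx1 opprK.
Qed.

Lemma DT : (Dinner)^T = Dinner.
Proof. by rewrite /Dinner tr_block_mx tr_block_mx !trmx0 !trmx1 linearN /= trmx1. Qed.
End Blk.
Section T. Variable m : nat. Variable L : 'M[R]_(m./2).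
Lemma DK : Dinner m *m Kinner m L = - Ainner m L.
Proof.
rewrite /Kinner /Dinner /Ainner mulmx_block.
rewrite !mul0mx !mulmx0 !addr0 !add0r.
rewrite mul_scalar_mx scale1r mul_block_col. rewrite !mul0mx !mulmx0 !addr0 !add0r.
rewrite mulNmx mul_scalar_mx scale1r.
by rewrite opp_block_mx opp_row_mx opp_col_mx !oppr0.
Qed.
Lemma DA : Dinner m *m Ainner m L = - Kinner m L.
Proof.
rewrite /Kinner /Dinner /Ainner mulmx_block.
rewrite !mul0mx !mulmx0 !addr0 !add0r.
rewrite mul_scalar_mx scale1r mul_block_col. rewrite !mul0mx !mulmx0 !addr0 !add0r.
rewrite mulNmx mul_scalar_mx scale1r.
by rewrite opp_block_mx opp_row_mx opp_col_mx !oppr0 opprK.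
Qed.
End T.
Lemma oeq n (a b : 'I_n) : (a == b) = (nat_of_ord a == nat_of_ord b).
Proof. by []. Qed.

Ltac fin := repeat (case: eqP => ? /=); repeat (case: leqP => ? /=);
   rewrite ?mulr1n ?mulr0n ?oppr0 //; lia.

Lemma Dinner_E m (i j : 'I_(m./2 + (odd m + m./2))) :
  Dinner m i j = if i == j then (if (m./2 + odd m <= i)%N then -1 else 1) else 0.
Proof.
rewrite /Dinner !mxE.
case: (splitP i) => i1 Hi; rewrite !mxE; case: (splitP j) => j1 Hj; rewrite !mxE.
- rewrite !oeq Hi Hj; have := ltn_ord i1; have := ltn_ord j1; fin.
- rewrite !oeq Hi Hj; have := ltn_ord i1; have := ltn_ord j1; fin.
- rewrite !oeq Hi Hj; have := ltn_ord i1; have := ltn_ord j1; fin.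
- case: (splitP i1) => i2 Hi2; rewrite !mxE; case: (splitP j1) => j2 Hj2; rewrite !mxE;
  rewrite !oeq Hi Hj Hi2 Hj2; have := ltn_ord i2; have := ltn_ord j2; fin.
Qed.
Lemma Dblk_E m (i j : 'I_m) :
  Dblk m i j = if i == j then (if (m - m./2 <= i)%N then -1 else 1) else 0.
Proof.
have e : (m - m./2 = m./2 + odd m)%N by have := blk_eq m; lia.
by rewrite /Dblk /castm castmxE Dinner_E !oeq /= e.
Qed.
Lemma Dblk_D m : Dblk m = castm (Dinner m). Proof. by []. Qed.
Lemma Kblk_D m L : Kblk L = castm (Kinner m L). Proof. by []. Qed.
Lemma Ablk_D m L : Ablk L = castm (Ainner m L). Proof. by []. Qed.
Lemma cR_plus (f g : R -> R) x : continuous f x -> continuous g x ->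
  continuous (fun s => f s + g s) x.
Proof. move=> hf hg; exact: (continuous_plus f g x hf hg). Qed.
Lemma cR_mul (f g : R -> R) x : continuous f x -> continuous g x ->
  continuous (fun s => f s * g s) x.
Proof. move=> hf hg; exact: (continuous_mult f g x hf hg). Qed.
Lemma cR_const (c x : R) : continuous (fun _ : R => c) x.
Proof. exact: continuous_const. Qed.
Lemma cR_opp (f : R -> R) x : continuous f x -> continuous (fun s => - f s) x.
Proof. move=> hf; exact: (continuous_opp f x hf). Qed.

Lemma cR_ext (f g : R -> R) x : (forall s, f s = g s) -> continuous f x -> continuous g x.
Proof. move=> h; exact: (continuous_ext f g x h). Qed.
Lemma dR_ext (f g : R -> R) x l : (forall s, f s = g s) -> is_derive f x l -> is_derive g x l.
Proof. move=> h; exact: (is_derive_ext f g x l h). Qed.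

Lemma cR_sum n (F : 'I_n -> R -> R) x : (forall l, continuous (F l) x) ->
  continuous (fun s => \sum_(l < n) F l s) x.
Proof.
elim: n F => [|n IH] F hF.
  apply: (cR_ext (fun _ => 0)); first by move=> s; rewrite big_ord0.
  exact: cR_const.
apply: (cR_ext (fun s => \sum_(l < n) F (widen_ord (leqnSn n) l) s + F ord_max s)).
  by move=> s; rewrite big_ord_recr.
apply: cR_plus; last exact: hF.
exact: IH.
Qed.

Lemma dR_plus (f g : R -> R) x df dg : is_derive f x df -> is_derive g x dg ->
  is_derive (fun s => f s + g s) x (df + dg).
Proof. move=> hf hg; exact: (is_derive_plus f g x df dg hf hg). Qed.
Lemma dR_mul (f g : R -> R) x df dg : is_derive f x df -> is_derive g x dg ->
  is_derive (fun s => f s * g s) x (df * g x + f x * dg).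
Proof.
move=> hf hg; apply: (is_derive_mult f g x df dg hf hg).
by move=> a b; rewrite /mult /=; exact: Rmult_comm.
Qed.
Lemma dR_const (c x : R) : is_derive (fun _ : R => c) x 0.
Proof. exact: is_derive_const. Qed.
Lemma dR_scal (f : R -> R) x (k df : R) : is_derive f x df ->
  is_derive (fun s => k * f s) x (k * df).
Proof. move=> hf; exact: (is_derive_scal f x k df hf). Qed.

Lemma dR_val (f : R -> R) x l l' : is_derive f x l -> l = l' -> is_derive f x l'.
Proof. by move=> h <-. Qed.

Lemma dR_sum n (F dF : 'I_n -> R -> R) x : (forall l, is_derive (F l) x (dF l x)) ->
  is_derive (fun s => \sum_(l < n) F l s) x (\sum_(l < n) dF l x).
Proof.
elim: n F dF => [|n IH] F dF hF.
  apply: (dR_ext (fun _ => 0)); first by move=> s; rewrite big_ord0.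
  by rewrite big_ord0; exact: dR_const.
apply: (dR_ext (fun s => \sum_(l < n) F (widen_ord (leqnSn n) l) s + F ord_max s)).
  by move=> s; rewrite big_ord_recr.
rewrite big_ord_recr; apply: dR_plus; last exact: hF.
exact: (IH (fun l => F (widen_ord (leqnSn n) l)) (fun l => dF (widen_ord (leqnSn n) l))).
Qed.

Lemma dR_pow (n : nat) x : is_derive (fun s : R => s ^+ n) x (n%:R * x ^+ n.-1).
Proof.
have h := is_derive_pow (fun s => s) n x 1 (is_derive_id x).
apply: (dR_ext (fun s => pow s n)); first by move=> s; rewrite RpowE.
rewrite -INRE -RpowE; by rewrite Rmult_1_r in h.
Qed.

Lemma cR_pow (n : nat) x : continuous (fun s : R => s ^+ n) x.
Proof. apply: ex_derive_continuous; eexists; exact: dR_pow. Qed.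

Set Implicit Arguments. Unset Strict Implicit. Unset Printing Implicit Defensive.
Definition ccont m (y : R -> 'cV[R]_m) x := forall i, continuous (fun s => y s i 0) x.
Definition cder m (y : R -> 'cV[R]_m) (y' : 'cV[R]_m) x :=
  forall i, is_derive (fun s => y s i 0) x (y' i 0).

Lemma ev_der N m k (c : field N m k) j x : cder (ev c j) (evx c j x) x.
Proof.
move=> i; apply: (dR_ext (fun s => \sum_(l < k.+1) c j i l * s ^+ l)).
  by move=> s; rewrite mxE.
rewrite mxE; apply: (@dR_sum _ (fun l s => c j i l * s ^+ l)
   (fun l s => c j i l * ((l : nat)%:R * s ^+ (l.-1)))) => l.
apply: dR_scal; exact: dR_pow.
Qed.

Lemma ev_cont N m k (c : field N m k) j x : ccont (ev c j) x.
Proof. move=> i; apply: ex_derive_continuous; eexists; exact: ev_der. Qed.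

Lemma evx_cont N m k (c : field N m k) j x : ccont (evx c j) x.
Proof.
move=> i; apply: (cR_ext (fun s => \sum_(l < k.+1) c j i l * ((l : nat)%:R * s ^+ (l.-1)))).
  by move=> s; rewrite mxE.
apply: cR_sum => l; apply: cR_mul; first exact: cR_const.
apply: cR_mul; first exact: cR_const. exact: cR_pow.
Qed.

Lemma mul_cont m (H : 'M[R]_m) y x : ccont y x -> ccont (fun s => H *m y s) x.
Proof.
move=> hy i; apply: (cR_ext (fun s => \sum_(l < m) H i l * y s l 0)).
  by move=> s; rewrite mxE.
apply: cR_sum => l; apply: cR_mul; [exact: cR_const | exact: hy].
Qed.

Lemma mul_der m (H : 'M[R]_m) y y' x : cder y y' x -> cder (fun s => H *m y s) (H *m y') x.
Proof.
move=> hy i; apply: (dR_ext (fun s => \sum_(l < m) H i l * y s l 0)).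
  by move=> s; rewrite mxE.
rewrite mxE; apply: (@dR_sum _ (fun l s => H i l * y s l 0) (fun l s => H i l * y' l 0)) => l.
apply: dR_scal; exact: hy.
Qed.

Lemma dot_cont m (y1 y2 : R -> 'cV[R]_m) x : ccont y1 x -> ccont y2 x ->
  continuous (fun s => dotv (y1 s) (y2 s)) x.
Proof.
move=> h1 h2; apply: cR_sum => l; apply: cR_mul; [exact: h1 | exact: h2].
Qed.

Lemma dot_der m (y1 y2 : R -> 'cV[R]_m) y1' y2' x : cder y1 y1' x -> cder y2 y2' x ->
  is_derive (fun s => dotv (y1 s) (y2 s)) x (dotv y1' (y2 x) + dotv (y1 x) y2').
Proof.
move=> h1 h2; rewrite /dotv -big_split /=.
apply: (@dR_sum _ (fun l s => y1 s l 0 * y2 s l 0)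
   (fun l s => y1' l 0 * y2 s l 0 + y1 s l 0 * y2' l 0)) => l.
apply: dR_mul; [exact: h1 | exact: h2].
Qed.

Lemma contR_eps (f : R -> R) x : continuous f x ->
  forall eps : R, 0 < eps -> exists2 d : R, 0 < d &
    forall s, `|s - x| < d -> `|f s - f x| < eps.
Proof.
move=> /continuity_pt_filterlim hf eps /RltP heps.
have [alp [/RltP halp H]] := hf eps heps.
exists alp => // s hs.
have [->|hne] := eqVneq s x; first by rewrite !subrr normr0; apply/RltP.
have := H s; rewrite /R_dist /= => H'.
apply/RltP; rewrite -RabsE -RminusE. apply: H'; split.
  by split => //; apply/eqP; rewrite eq_sym.
rewrite /R_dist RabsE RminusE; apply/RltP; exact: hs.
Qed.

Lemma contR_of_eps (f : R -> R) x :
  (forall eps : R, 0 < eps -> exists2 d : R, 0 < d &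
    forall s, `|s - x| < d -> `|f s - f x| < eps) -> continuous f x.
Proof.
move=> H; apply/continuity_pt_filterlim => eps /RltP heps.
have [d hd Hd] := H eps heps.
exists d; split; first by apply/RltP.
move=> s [_ hs]; have hs2 : Rlt (Rabs (Rminus s x)) d := hs; move: hs2; rewrite RabsE RminusE => /RltP hs2.
change (Rlt (Rabs (Rminus (f s) (f x))) eps); rewrite RabsE RminusE; apply/RltP; exact: Hd.
Qed.

Lemma comp_cont m (f : 'cV[R]_m -> R) y x : (forall v, contv f v) -> ccont y x ->
  continuous (fun s => f (y s)) x.
Proof.
move=> hf hy; apply: contR_of_eps => eps heps.
have [d hd Hd] := hf (y x) eps heps.
have H : forall l : seq 'I_m, exists2 del : R, 0 < del &
   forall s, `|s - x| < del -> forall i, i \in l -> `|y s i 0 - y x i 0| < d.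
  elim => [|i l [del hdel Hdel]]; first by exists 1.
  have [di hdi Hdi] := contR_eps (hy i) hd.
  exists (Num.min del di); first by rewrite lt_min hdel hdi.
  move=> s; rewrite lt_min => /andP [h1 h2] i'; rewrite inE => /orP [/eqP -> | hi'].
    exact: Hdi.
  exact: Hdel.
have [del hdel Hdel] := H (enum 'I_m).
exists del => // s hs; apply: Hd => i; apply: Hdel => //; by rewrite mem_enum.
Qed.

Lemma grad_cont m (S : 'cV[R]_m -> R) y x : smooth S -> ccont y x ->
  ccont (fun s => gradS S (y s)) x.
Proof.
move=> hS hy i; apply: (cR_ext (fun s => pdir i S (y s))).
  by move=> s; rewrite mxE.
apply: comp_cont => // v; exact: (proj1 (hS [:: i] v)).
Qed.

Lemma S_cont m (S : 'cV[R]_m -> R) y x : smooth S -> ccont y x ->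
  continuous (fun s => S (y s)) x.
Proof. move=> hS hy; apply: comp_cont => // v; exact: (proj1 (hS [::] v)). Qed.

Lemma dotv_mulr m (X : 'M[R]_m) a b : dotv a (X *m b) = dotv (X^T *m a) b.
Proof. by rewrite dotv_mull trmxK. Qed.

Lemma RInt_B (f g : R -> R) a b : ex_RInt f a b -> ex_RInt g a b ->
  RInt (fun x => f x - g x) a b = RInt f a b - RInt g a b.
Proof. move=> hf hg; exact: (RInt_minus f g a b hf hg). Qed.
Lemma RInt_D (f g : R -> R) a b : ex_RInt f a b -> ex_RInt g a b ->
  RInt (fun x => f x + g x) a b = RInt f a b + RInt g a b.
Proof. move=> hf hg; exact: (RInt_plus f g a b hf hg). Qed.
Lemma RInt_Z (f : R -> R) a b l : ex_RInt f a b ->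
  RInt (fun x => l * f x) a b = l * RInt f a b.
Proof. move=> hf; exact: (RInt_scal f a b l hf). Qed.
Lemma exR (f : R -> R) a b : (forall x, continuous f x) -> ex_RInt f a b.
Proof. move=> h; apply: ex_RInt_continuous => x _; exact: h. Qed.
Lemma RInt_extR (f g : R -> R) a b : (forall x, f x = g x) -> RInt f a b = RInt g a b.
Proof. by move=> h; apply: RInt_ext => x _; exact: h. Qed.
Lemma RInt_zero (f : R -> R) a b : (forall x, f x = 0) -> RInt f a b = 0.
Proof.
move=> h; rewrite (RInt_extR a b (g := fun _ => 0)) // RInt_const.
exact: Rmult_0_r.
Qed.
Lemma RInt_der (f df : R -> R) a b : (forall x, is_derive f x (df x)) ->
  (forall x, continuous df x) -> RInt df a b = f b - f a.
Proof.
move=> h1 h2; apply: is_RInt_unique.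
exact: (is_RInt_derive f df a b (fun x _ => h1 x) (fun x _ => h2 x)).
Qed.

Lemma col_lin m k (P : 'M[R]_m) (c : 'I_m -> 'I_k.+1 -> R) (w : 'I_k.+1 -> R) :
  \col_i (\sum_(l < k.+1) (\sum_(i' < m) P i i' * c i' l) * w l)
  = P *m \col_i (\sum_(l < k.+1) c i l * w l).
Proof.
apply/matrixP => i j; rewrite !mxE.
under eq_bigr do rewrite big_distrl /=.
rewrite exchange_big /=; apply: eq_bigr => i' _.
rewrite mxE big_distrr /=; apply: eq_bigr => l _; by rewrite mulrA.
Qed.

Lemma alg1 m (K G P H : 'M[R]_m) y y' :
  K^T = - K -> G^T = G -> H = K *m G -> G *m K = - H -> H^T = H ->
  P = 2^-1 *: (1%:M - G) ->
  dotv (K *m y) (P *m y') + 2^-1 * dotv (K *m y') y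
  = 4^-1 * (dotv (H *m y') y + dotv (H *m y) y').
Proof.
move=> hK hG hH hGK hHT hP.
have e1 : dotv (K *m y) (P *m y') = 2^-1 * (dotv (K *m y) y' - dotv (K *m y) (G *m y')).
  by rewrite hP -scalemxAl mulmxBl mul1mx dotvZr dotvBr.
have e2 : dotv (K *m y) y' = - dotv (K *m y') y.
  by rewrite dotv_mull hK mulNmx dotvNr dotvC.
have e3 : dotv (K *m y) (G *m y') = - dotv (H *m y) y'.
  by rewrite dotv_mulr hG mulmxA hGK mulNmx dotvNl.
have e4 : dotv (H *m y') y = dotv (H *m y) y'.
  by rewrite dotv_mull hHT dotvC.
rewrite e1 e2 e3 e4; field; by [].
Qed.

Lemma alg2 m (K A B G P H : 'M[R]_m) zp zm jt :
  G^T = G -> G *m K = - H -> H^T = H -> P = 2^-1 *: (1%:M - G) ->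
  (forall u v, dotv (B *m u) (P *m v) = 0) ->
  2^-1 * dotv (K *m (2^-1 *: (zp + zm)) + A *m (zp - zm)) (zp - zm)
  - 4^-1 * dotv (H *m zm) zm
  + dotv (K *m (2^-1 *: (zp + zm)) + A *m (zp - zm) + B *m jt) (P *m zm)
  + (4^-1 * dotv (H *m zp) zp
     - dotv (K *m (2^-1 *: (zp + zm)) + A *m (zp - zm) + B *m jt) (P *m zp))
  - 2^-1 * dotv (G *m A *m (zp - zm)) (zp - zm) = 0.
Proof.
move=> hG hGK hHT hP hB0.
rewrite !dotvDl !hB0 !addr0 -!dotvDl.
set w := zp - zm; set av := 2^-1 *: (zp + zm); set F := K *m av + A *m w.
have Pv : forall v : 'cV[R]_m, P *m v = 2^-1 *: (v - G *m v).
  by move=> v; rewrite hP -scalemxAl mulmxBl mul1mx.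
have eD : dotv F (P *m zm) - dotv F (P *m zp) = - dotv F (P *m w).
  by rewrite /w mulmxBr dotvBr opprB.
have e3 : dotv F (P *m w) = 2^-1 * dotv F w - 2^-1 * dotv F (G *m w).
  by rewrite Pv dotvZr dotvBr mulrBr.
have e4 : dotv F (G *m w) = dotv (K *m av) (G *m w) + dotv (A *m w) (G *m w).
  by rewrite dotvDl.
have e5 : dotv (A *m w) (G *m w) = dotv (G *m A *m w) w.
  by rewrite dotv_mulr hG mulmxA.
have e6 : dotv (K *m av) (G *m w) = - dotv (H *m av) w.
  by rewrite dotv_mulr hG mulmxA hGK mulNmx dotvNl.
have e8 : dotv (H *m zp) zm = dotv (H *m zm) zp.
  by rewrite dotv_mull hHT dotvC.
have e7 : dotv (H *m av) w = 2^-1 * (dotv (H *m zp) zp - dotv (H *m zm) zm).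
  rewrite /av /w -scalemxAr dotvZl mulmxDr dotvDl !dotvBr e8; congr (_ * _); ring.
lra.
Qed.

Lemma E0_E m (i j : 'I_m) :
  (2^-1 *: (1%:M - Dblk m)) i j = ((i == j) && (m - m./2 <= i)%N)%:R.
Proof.
rewrite !mxE Dblk_E; case: eqP => _ /=; rewrite ?mulr1n ?mulr0n; last by rewrite subrr mulr0.
by case: leqP => _ /=; rewrite ?mulr1n ?mulr0n; field.
Qed.

Lemma E0_dot m (a b : 'cV[R]_m) :
  dotv a ((2^-1 *: (1%:M - Dblk m)) *m b) = vdot a b.
Proof.
rewrite /dotv /vdot [in RHS]big_mkcond /=; apply: eq_bigr => i _.
rewrite mxE (bigD1 i) //= E0_E eqxx /= big1 ?addr0.
  by case: leqP => _; rewrite ?mulr1n ?mulr0n ?mul1r ?mul0r ?mulr0.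
by move=> l /negPf hl; rewrite E0_E eq_sym hl /= mul0r.
Qed.

Lemma conjQ m (Q X Y : 'M[R]_m) : Q *m Q^T = 1%:M ->
  (Q^T *m X *m Q) *m (Q^T *m Y *m Q) = Q^T *m (X *m Y) *m Q.
Proof.
move=> hQ; rewrite !mulmxA -(mulmxA (Q^T *m X) Q) hQ mulmx1 ?mulmxA //.
Qed.

Theorem corollary3p1 (m k N : nat) (xs : nat -> R)
    (M K A B Q : 'M[R]_m) (Lam : 'M[R]_(m./2)) (beta : R)
    (S : 'cV[R]_m -> R) (z : R -> field N m k) (a b : R) :
  (0 < N)%N ->
  (forall j : nat, (j < N)%N -> xs j < xs j.+1) ->
  M^T = - M -> K^T = - K -> A^T = A ->
  Q^T *m Q = 1%:M ->
  K = Q^T *m Kblk Lam *m Q ->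
  B = beta *: M ->
  (forall (i j : 'I_m), (m - m./2 <= j)%N -> (M *m Q^T) i j = 0) ->
  smooth S ->
  (forall t, a < t < b -> C1_at z t) ->
  (forall t, a < t < b -> dg_scheme xs M K A B S z t) ->
  let Atil := Q^T *m Dblk m *m Q *m A in
  (forall t, a < t < b ->
     energy xs K A S (z t) = vintegral xs Q S (z t) + jumpterm xs Atil (z t)) /\
  (forall alpha : R, - 2^-1 <= alpha <= 2^-1 ->
     A = alpha *: (Q^T *m Ablk Lam *m Q) ->
     Atil^T = - Atil /\
     (forall t, a < t < b -> energy xs K A S (z t) = vintegral xs Q S (z t))).
Proof.
move=> hN hxs hM hK hA hQ hKQ hB hMQ hS hC1 hDG Atil.
have hQ' : Q *m Q^T = 1%:M := mulmx1C hQ.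
pose G := Q^T *m Dblk m *m Q.
have hAtil : Atil = G *m A by [].
have GT : G^T = G.
  by rewrite /G !trmx_mul trmxK Dblk_D -castmT (DT m) mulmxA.
have hKG : K *m G = Q^T *m Ablk Lam *m Q.
  by rewrite hKQ /G conjQ // Kblk_D Dblk_D -castmM KD.
have hGK : G *m K = - (Q^T *m Ablk Lam *m Q).
  by rewrite hKQ /G conjQ // Kblk_D Dblk_D -castmM DK castmN mulmxN mulNmx.
pose P := 2^-1 *: (1%:M - G).
have hPE : P = Q^T *m (2^-1 *: (1%:M - Dblk m)) *m Q.
  by rewrite /P /G -scalemxAr -scalemxAl mulmxBr mulmxBl mulmx1 hQ.
have hMP : M *m P = 0.
  rewrite hPE !mulmxA.
  have -> : M *m Q^T *m (2^-1 *: (1%:M - Dblk m)) = 0; last by rewrite mul0mx.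
  apply/matrixP => i j; rewrite !mxE (bigD1 j) //= E0_E eqxx /= big1 ?addr0.
    by case: leqP => hj; rewrite ?mulr1n ?mulr0n ?mulr0 ?mulr1 // hMQ.
  by move=> l /negPf hl; rewrite E0_E hl /= mulr0.
have hvd : forall g y : 'cV[R]_m, dotv g (P *m y) = vdot (Q *m g) (Q *m y).
  by move=> g y; rewrite hPE -!mulmxA dotv_mulr trmxK E0_dot.
pose H := K *m G.
have HT : H^T = H.
  by rewrite /H trmx_mul GT hK mulmxN hGK opprK hKG.
have hGK' : G *m K = - H by rewrite hGK /H hKG.
have zeroM : forall u v : 'cV[R]_m, dotv (M *m u) (P *m v) = 0.
  by move=> u v; rewrite dotv_mull hM mulNmx mulmxA hMP mul0mx oppr0 /dotv big1 // => i _; rewrite mxE mulr0.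
have zeroB : forall u v : 'cV[R]_m, dotv (B *m u) (P *m v) = 0.
  by move=> u v; rewrite hB -scalemxAl dotvZl zeroM mulr0.
have part1 : forall t, a < t < b ->
     energy xs K A S (z t) = vintegral xs Q S (z t) + jumpterm xs Atil (z t).
  move=> t ht.
  have sch := hDG t ht.
  set c := z t.
  pose phi : field N m k := fun j i l => \sum_(i' < m) P i i' * c j i' l.
  have evphiF : forall j, ev phi j = fun x => P *m ev c j x.
    move=> j; apply: functional_extensionality => x.
    exact: (col_lin P (c j) (fun l => x ^+ l)).
  have evxphiF : forall j, evx phi j = fun x => P *m evx c j x.
    move=> j; apply: functional_extensionality => x.
    exact: (col_lin P (c j) (fun l => (l : nat)%:R * x ^+ l.-1)).
  pose I1 j := RInt (fun x => S (ev c j x)) (xs j) (xs j.+1).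
  pose I2 j := RInt (fun x => dotv (gradS S (ev c j x)) (P *m ev c j x)) (xs j) (xs j.+1).
  pose I3 j := RInt (fun x => dotv (K *m evx c j x) (ev c j x)) (xs j) (xs j.+1).
  pose I4 j := RInt (fun x => dotv (K *m ev c j x) (P *m evx c j x)) (xs j) (xs j.+1).
  pose qf (v : 'cV[R]_m) := dotv (H *m v) v.
  pose F j := flux xs K A B z t j.
  pose Dm j := dotv (F j) (P *m trm xs c j).
  pose Dp j := dotv (F j) (P *m trp xs c j).
  pose g j := 4^-1 * qf (trp xs c j) - Dp j.
  have c1 : forall j x, continuous (fun s => S (ev c j s)) x.
    by move=> j x; apply: S_cont => //; exact: ev_cont.
  have c2 : forall j x, continuous (fun s => dotv (gradS S (ev c j s)) (P *m ev c j s)) x.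
    move=> j x; apply: dot_cont; last by apply: mul_cont; exact: ev_cont.
    by apply: grad_cont => //; exact: ev_cont.
  have c3 : forall j x, continuous (fun s => dotv (K *m evx c j s) (ev c j s)) x.
    move=> j x; apply: dot_cont; last exact: ev_cont.
    by apply: mul_cont; exact: evx_cont.
  have c4 : forall j x, continuous (fun s => dotv (K *m ev c j s) (P *m evx c j s)) x.
    move=> j x; apply: dot_cont; first by apply: mul_cont; exact: ev_cont.
    by apply: mul_cont; exact: evx_cont.
  have eE : forall j : 'I_N, RInt (fun x => S (ev c j x) - 2^-1 * dotv (K *m evx c j x) (ev c j x)) (xs j) (xs j.+1)
      = I1 j - 2^-1 * I3 j.
    move=> j; rewrite RInt_B; first by rewrite RInt_Z //; exact: exR.
      exact: exR.
    by apply: exR => x; apply: cR_mul; [exact: cR_const | exact: c3].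
  have eV : forall j : 'I_N, RInt (fun x => S (ev c j x) - vdot (Q *m gradS S (ev c j x)) (Q *m ev c j x)) (xs j) (xs j.+1)
      = I1 j - I2 j.
    move=> j; rewrite (RInt_extR _ _ (g := fun x => S (ev c j x) - dotv (gradS S (ev c j x)) (P *m ev c j x))); last by move=> x; rewrite hvd.
    by rewrite RInt_B //; exact: exR.
  have eT : forall j : 'I_N, RInt (fun x => dotv (M *m ev (dtf z t) j x) (P *m ev c j x)) (xs j) (xs j.+1) = 0.
    by move=> j; apply: RInt_zero => x; rewrite zeroM.
  have eF : forall j : 'I_N, I4 j + 2^-1 * I3 j = 4^-1 * (qf (trm xs c j) - qf (ev c j (xs j))).
    move=> j; rewrite /I4 /I3 -RInt_Z; last exact: exR.
    rewrite -RInt_D; first last.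
    - by apply: exR => x; apply: cR_mul; [exact: cR_const | exact: c3].
    - exact: exR.
    rewrite (RInt_extR _ _ (g := fun x => 4^-1 * (dotv (H *m evx c j x) (ev c j x) + dotv (H *m ev c j x) (evx c j x)))); last first.
      by move=> x; apply: alg1 => //.
    have cd : forall x, continuous (fun x => dotv (H *m evx c j x) (ev c j x) + dotv (H *m ev c j x) (evx c j x)) x.
      move=> x; apply: cR_plus; apply: dot_cont; try (apply: mul_cont); try exact: ev_cont; exact: evx_cont.
    rewrite RInt_Z; last exact: exR.
    congr (_ * _); rewrite (RInt_der (f := fun s => qf (ev c j s))) //.
    move=> x; apply: dot_der; last exact: ev_der.
    apply: mul_der; exact: ev_der.
  have etp : forall j : 'I_N, trp xs c (ord_pred j) = ev c j (xs j).
    by move=> j; rewrite /trp ord_predK.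
  have eI2 : forall j : 'I_N, I2 j = 2^-1 * I3 j - 4^-1 * qf (trm xs c j) + Dm j + g (ord_pred j).
    move=> j; have sj := sch j phi.
    rewrite !evphiF !evxphiF /= eT -etp in sj.
    have := eF j; rewrite -etp.
    rewrite /I2 -sj -/(I4 j) /g /Dp /Dm /F.
    rewrite -/(trm xs c j); move=> h; lra.
  have greidx : \sum_(j < N) g (ord_pred j) = \sum_(j < N) g j.
    by rewrite [RHS](reindex_inj (can_inj (@ord_predK N))).
  have HI2 : \sum_(j < N) I2 j = 2^-1 * \sum_(j < N) I3 j - 4^-1 * \sum_(j < N) qf (trm xs c j)
      + \sum_(j < N) Dm j + \sum_(j < N) g j.
    rewrite (eq_bigr _ (fun j _ => eI2 j)) -greidx.
    by rewrite !(big_split, sumrN) /= -!mulr_sumr.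
  have Hz : \sum_(j < N) (2^-1 * dotv (K *m avg xs c j + A *m jump xs c j) (jump xs c j)
      - 4^-1 * qf (trm xs c j) + Dm j + g j
      - 2^-1 * dotv (Atil *m jump xs c j) (jump xs c j)) = 0.
    apply: big1 => j _.
    exact: (@alg2 m K A B G P H (trp xs c j) (trm xs c j) (jump xs (dtf z t) j) GT hGK' HT erefl zeroB).
  rewrite !(big_split, sumrN) /= -!mulr_sumr in Hz.
  rewrite /energy /vintegral /jumpterm ?RplusE ?RmultE.
  rewrite (eq_bigr _ (fun j _ => eE j)) (eq_bigr _ (fun j _ => eV j)).
  rewrite !(big_split, sumrN) /= -!mulr_sumr HI2.
  have Hg : \sum_(j < N) g j = 4^-1 * \sum_(j < N) qf (trp xs c j) - \sum_(j < N) Dp j.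
    by rewrite /g !(big_split, sumrN) /= -!mulr_sumr.
  rewrite Hg; lra.
split => // alpha _ hAa.
have hAt : Atil^T = - Atil.
  rewrite hAtil hAa /G -scalemxAr conjQ // Dblk_D Ablk_D -castmM DA castmN.
  rewrite mulmxN mulNmx -Kblk_D -hKQ linearZ /= linearN /= hK.
  by rewrite opprK scalerN opprK.
split => // t ht; rewrite part1 // /jumpterm big1; first by rewrite Rmult_0_r addr0.
by move=> j _; apply: dotv_skew.
Qed.
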